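(* Let $f:\mathcal{X}\times\mathcal{U}\to\mathcal{X}$ be Lipschitz with constant $L_f$ (i.e. $\|f(x,u)-f(x',u')\|_\infty\le L_f\|(x-x',u-u')\|_\infty$) with $f(0,u_0)=0$, and let $V:\mathcal{X}\to\mathbb{R}$ and $\pi:\mathcal{X}\to\mathcal{U}$, with $\pi$ Lipschitz with constant $L_\pi$. Let $\gamma>0$, $\epsilon>0$, and suppose $(V,\pi)$ is $\epsilon$-stable within $\mathcal{R}(\gamma)$, $\|\pi(0)-u_0\|_\infty\le\epsilon$, and $\gamma\ge L_f\max\{1,L_\pi+1\}\epsilon$. Let $B(\gamma)$ be any number with $B(\gamma)\ge\max\big(\sup_{x\in\mathcal{R}(\gamma)}\|f(x,\pi(x))\|_\infty,\ \gamma\big)$, let $V^*=\min\{V(x): x\in\mathcal{X},\ \gamma\le\|x\|_\infty\le B(\gamma)\}$ (assumed to be attained), and let $\rho=V^*-\mu$ for some $\mu>0$. Then $\mathcal{D}(\gamma,\rho)=\{x\in\mathcal{R}(\gamma): V(x)\le\rho\}$ is an $\mathcal{R}(\gamma)$-invariant sublevel set, i.e. $x\in\mathcal{D}(\gamma,\rho)$ implies $f(x,\pi(x))\in\mathcal{R}(\gamma)$.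
   Context: All norms are $\|\cdot\|_\infty$. $\mathcal{R}(\gamma)=\{x\in\mathcal{X}:\|x\|_\infty\le\gamma\}$. $\mathcal{B}(0,\epsilon)=\{x:\|x\|_\infty<\epsilon\}$. The pair $(V,\pi)$ is called $\epsilon$-stable within a region $\mathcal{R}$ if: (a) $V(0)=0$; (b) there exists $\zeta>0$ such that $V(f(x,\pi(x)))-V(x)<-\zeta$ for all $x\in\mathcal{R}\setminus\mathcal{B}(0,\epsilon)$; (c) $V(x)>0$ for all $x\in\mathcal{R}\setminus\mathcal{B}(0,\epsilon)$. *)

(* Defs.v *)
(* X = 'rV[R]_n, U = 'rV[R]_m, R : realType.
   The norm `|x| on row vectors is MathComp-Analysis' mx_norm,
   i.e. the sup-norm max_i |x_i|. *)
From HB Require Import structures.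
From mathcomp Require Import all_boot all_order all_algebra.
From mathcomp Require Import all_classical all_reals all_analysis.
Set Implicit Arguments. Unset Strict Implicit. Unset Printing Implicit Defensive.
Import Order.TTheory GRing.Theory Num.Theory.
Import numFieldNormedType.Exports.
Local Open Scope ring_scope.

Definition Rgam {R : realType} {n : nat} (gamma : R) (x : 'rV[R]_n) : Prop :=
  `|x| <= gamma.

Definition Ball0 {R : realType} {n : nat} (eps : R) (x : 'rV[R]_n) : Prop :=
  `|x| < eps.

Definition eps_stable {R : realType} {n m : nat}
  (f : 'rV[R]_n -> 'rV[R]_m -> 'rV[R]_n)
  (V : 'rV[R]_n -> R) (pi : 'rV[R]_n -> 'rV[R]_m)
  (eps : R) (Reg : 'rV[R]_n -> Prop) : Prop :=
  [/\ V 0 = 0,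
      exists2 zeta : R, 0 < zeta &
        forall x, Reg x -> ~ Ball0 eps x -> V (f x (pi x)) - V x < - zeta
    & forall x, Reg x -> ~ Ball0 eps x -> 0 < V x].

Definition Dset {R : realType} {n : nat} (V : 'rV[R]_n -> R) (gamma rho : R)
  (x : 'rV[R]_n) : Prop := Rgam gamma x /\ V x <= rho.

(* Main.v *)
Require Import Defs.
From HB Require Import structures.
From mathcomp Require Import all_boot all_order all_algebra.
From mathcomp Require Import all_classical all_reals all_analysis.
From mathcomp Require Import lra.
Import Order.TTheory GRing.Theory Num.Theory.
Import numFieldNormedType.Exports.
Local Open Scope ring_scope.

Lemma aux (R : realType) (a b vs mu zeta : R) :
  a - b < - zeta -> vs <= a -> b <= vs - mu -> 0 < zeta -> 0 < mu -> False.
Proof. move=> *; lra. Qed.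

Theorem theorem2 (R : realType) (n m : nat)
  (f : 'rV[R]_n -> 'rV[R]_m -> 'rV[R]_n) (u0 : 'rV[R]_m)
  (V : 'rV[R]_n -> R) (pi : 'rV[R]_n -> 'rV[R]_m)
  (Lf Lpi gamma eps B Vstar mu rho : R) :
  (forall x x' u u', `|f x u - f x' u'| <= Lf * Num.max `|x - x'| `|u - u'|) ->
  f 0 u0 = 0 ->
  (forall x x', `|pi x - pi x'| <= Lpi * `|x - x'|) ->
  0 < gamma -> 0 < eps ->
  eps_stable f V pi eps (Rgam gamma) ->
  `|pi 0 - u0| <= eps ->
  Lf * Num.max 1 (Lpi + 1) * eps <= gamma ->
  (forall x, Rgam gamma x -> `|f x (pi x)| <= B) -> gamma <= B ->
  (exists2 xs : 'rV[R]_n, gamma <= `|xs| <= B & V xs = Vstar) ->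
  (forall x : 'rV[R]_n, gamma <= `|x| <= B -> Vstar <= V x) ->
  0 < mu -> rho = Vstar - mu ->
  forall x, Dset V gamma rho x -> Rgam gamma (f x (pi x)).
Proof.
move=> Hf Hf0 Hpi gpos epos [_ [zeta zpos Hdec] _] Hpi0 Hg HB gB _ Hmin mupos -> x [Hx HV].
have e0 : 0 <= eps by exact: ltW.
rewrite /Rgam; have [//|Hlt] := leP `|f x (pi x)| gamma.
exfalso.
have [Hxe|Hxe] := ltP `|x| eps.
  have HM : `|f x (pi x)| <= Lf * Num.max `|x| `|pi x - u0|.
    by have := Hf x 0 (pi x) u0; rewrite Hf0 !subr0.
  have Hu : `|pi x - u0| <= Num.max 1 (Lpi + 1) * eps.
    have [x0|xn0] := eqVneq x 0.
      rewrite x0; apply: (le_trans Hpi0); by rewrite ler_peMl // le_max lexx.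
    have xpos : 0 < `|x| by rewrite normr_gt0.
    have Lp : 0 <= Lpi.
      have := Hpi x x; rewrite subrr normr0.
      have := Hpi x 0; rewrite subr0 => H1 _.
      by rewrite -(pmulr_lge0 _ xpos); apply: le_trans H1.
    have : `|pi x - u0| <= Lpi * `|x| + eps.
      have -> : pi x - u0 = (pi x - pi 0) + (pi 0 - u0) by rewrite addrA subrK.
      apply: (le_trans (ler_normD _ _)); apply: lerD => //.
      by have := Hpi x 0; rewrite subr0.
    move=> H; apply: (le_trans H).
    have : Lpi * `|x| + eps <= (Lpi + 1) * eps.
      by rewrite mulrDl mul1r lerD2r ler_wpM2l // ltW.
    move=> H2; apply: (le_trans H2); apply: ler_wpM2r; [exact: ltW|].
    by rewrite le_max lexx orbT.
  have HM2 : Lf * Num.max `|x| `|pi x - u0| <= gamma.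
    have [Lfn|Lfp] := ltP Lf 0.
      apply: (le_trans _ (ltW gpos)); apply: mulr_le0_ge0; first exact: ltW.
      by rewrite le_max normr_ge0.
    apply: le_trans Hg; rewrite -mulrA; apply: ler_wpM2l => //.
    rewrite ge_max Hu andbT; apply: (le_trans (ltW Hxe)).
    by rewrite ler_peMl // le_max lexx.
  by have := le_trans HM HM2; rewrite leNgt Hlt.
have nb : ~ Ball0 eps x by rewrite /Ball0 ltNge Hxe.
have H1 := Hdec x Hx nb.
have H2 := Hmin (f x (pi x)) (introT andP (conj (ltW Hlt) (HB x Hx))).
move: H1 H2 HV; move: (V (f x (pi x))) (V x) => a b H1 H2 HV.
exact: (@aux R a b Vstar mu zeta H1 H2 HV zpos mupos).
Qed.
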